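(* Let $\gamma\in(0,\tfrac12)$, and let $\mathbf{w}\in\mathbb{R}^R$ be a fixed vector of regularization weights with strictly positive entries, and set $w_o=\min_{k=1,\dots,R} w_k$. Let $\boldsymbol{\theta}^\star\in\arg\min_{\boldsymbol{\theta}\in\mathbb{R}^R}\mathcal{R}(\boldsymbol{\theta})$ and $$\widehat{\boldsymbol{\theta}}\in\arg\min_{\boldsymbol{\theta}\in\mathbb{R}^R}\; -\frac1n\ln p_{\boldsymbol{\theta}}(\mathbf{y}\mid\mathbf{r}) + n^{-\gamma}\,\|\mathbf{w}\odot\boldsymbol{\theta}\|_1 ,$$ and assume both minimizers exist. Then $$\mathcal{R}(\widehat{\boldsymbol{\theta}})\le \mathcal{R}(\boldsymbol{\theta}^\star)+2n^{-\gamma}\,\|\mathbf{w}\odot\boldsymbol{\theta}^\star\|_1$$ holds with probability at least $$\max\Big(0,\;1-2R\exp\Big\{-\frac{w_o^2\,n^{1-2\gamma}}{2Y^2}\Big\}\Big).$$ The bound requires no assumption that $p(y\mid r)$ belongs to the Poisson model class.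
   Context: A spatial domain is partitioned into $R$ disjoint regions indexed by $r\in\{1,\dots,R\}$. Data $(\mathbf{r},\mathbf{y})=\{(r_1,y_1),\dots,(r_n,y_n)\}$ are $n$ independent draws $(r_i,y_i)\sim p(r)p(y\mid r)$ from an unknown distribution, where the counts satisfy $y_i\in\{0,1,\dots,Y\}$ for a known maximum count $Y$. Write $p(\mathbf{y}\mid\mathbf{r})=\prod_{i=1}^n p(y_i\mid r_i)$ and $\mathbb{E}[y\mid r]$ for the true conditional mean. Model class: for $\boldsymbol{\theta}\in\mathbb{R}^R$, $p_{\boldsymbol{\theta}}(y\mid r)$ is the Poisson distribution with mean $\mathbb{E}_{\boldsymbol{\theta}}[y\mid r]=\exp(\boldsymbol{\phi}(r)^\top\boldsymbol{\theta})$, where $\boldsymbol{\phi}(r)=(\phi_1(r),\dots,\phi_R(r))^\top$ is a fixed spatial basis vector (cubic B-spline values, $\phi_k$ centered at region $k$) with $0\le\phi_k(r)\le 1$ for all $k,r$; and $p_{\boldsymbol{\theta}}(\mathbf{y}\mid\mathbf{r})=\prod_{i=1}^n p_{\boldsymbol{\theta}}(y_i\mid r_i)$. Out-of-sample accuracy (KL divergence per sample, conditional on $\mathbf{r}$): $$\mathcal{R}(\boldsymbol{\theta})=\frac1n\,\mathbb{E}_{\mathbf{y}\mid\mathbf{r}}\Big[\ln\frac{p(\mathbf{y}\mid\mathbf{r})}{p_{\boldsymbol{\theta}}(\mathbf{y}\mid\mathbf{r})}\Big].$$ $\odot$ denotes the elementwise (Hadamard) product. *)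

(* Defs.v *)
From HB Require Import structures.
From mathcomp Require Import all_boot all_order all_algebra.
From mathcomp Require Import all_classical all_reals all_analysis.
Set Implicit Arguments. Unset Strict Implicit. Unset Printing Implicit Defensive.
Import Order.TTheory GRing.Theory Num.Theory.
Local Open Scope ring_scope.

Section PoissonModel.
Variable K : realType.

Definition lin (R : nat) (phi : 'I_R -> 'rV[K]_R) (r : 'I_R) (th : 'rV[K]_R) : K :=
  \sum_(k < R) phi r 0 k * th 0 k.

Definition pois_pmf (mu : K) (y : nat) : K := mu ^+ y * expR (- mu) / (y`!)%:R.

Definition model_pmf (R : nat) (phi : 'I_R -> 'rV[K]_R) (th : 'rV[K]_R)
  (r : 'I_R) (y : nat) : K := pois_pmf (expR (lin phi r th)) y.

Definition joint_model (R n Y : nat) (phi : 'I_R -> 'rV[K]_R) (th : 'rV[K]_R)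
  (rs : 'I_n -> 'I_R) (ys : {ffun 'I_n -> 'I_Y.+1}) : K :=
  \prod_(i < n) model_pmf phi th (rs i) (ys i).

(* true p(y | r) = prod_i p(y_i | r_i), with p(. | r) = q r on {0..Y} *)
Definition joint_true (R n Y : nat) (q : 'I_R -> 'I_Y.+1 -> K)
  (rs : 'I_n -> 'I_R) (ys : {ffun 'I_n -> 'I_Y.+1}) : K :=
  \prod_(i < n) q (rs i) (ys i).

Definition prob (R n Y : nat) (q : 'I_R -> 'I_Y.+1 -> K) (rs : 'I_n -> 'I_R)
  (E : pred {ffun 'I_n -> 'I_Y.+1}) : K :=
  \sum_(ys : {ffun 'I_n -> 'I_Y.+1} | E ys) joint_true q rs ys.

(* out-of-sample risk R(theta) = (1/n) E_{y|r}[ ln p(y|r)/p_theta(y|r) ]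
   (terms with p(y|r) = 0 contribute 0, as ln 0 = 0 here and they are multiplied by 0) *)
Definition risk (R n Y : nat) (q : 'I_R -> 'I_Y.+1 -> K) (phi : 'I_R -> 'rV[K]_R)
  (rs : 'I_n -> 'I_R) (th : 'rV[K]_R) : K :=
  n%:R^-1 * \sum_(ys : {ffun 'I_n -> 'I_Y.+1})
      joint_true q rs ys * (ln (joint_true q rs ys) - ln (joint_model phi th rs ys)).

Definition wl1 (R : nat) (w th : 'rV[K]_R) : K := \sum_(k < R) `|w 0 k * th 0 k|.

Definition pen_obj (R n Y : nat) (phi : 'I_R -> 'rV[K]_R) (rs : 'I_n -> 'I_R)
  (gamma : K) (w : 'rV[K]_R) (ys : {ffun 'I_n -> 'I_Y.+1}) (th : 'rV[K]_R) : K :=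
  - (n%:R^-1 * ln (joint_model phi th rs ys)) + (n%:R `^ (- gamma)) * wl1 w th.

End PoissonModel.

(* Main.v *)
Require Import Defs.
From HB Require Import structures.
From mathcomp Require Import all_boot all_order all_algebra.
From mathcomp Require Import all_classical all_reals all_analysis.
From mathcomp Require Import ring lra zify.
Import Order.TTheory GRing.Theory Num.Theory.
Local Open Scope ring_scope.

Section S.
Variable K : realType.

Lemma fact_even (j : nat) : (2 ^ j * j`! <= (j.*2)`!)%N.
Proof.
elim: j => [//|j IH].
rewrite doubleS !factS expnS.
have e : (2 * 2 ^ j * (j.+1 * j`!) = (2 * j.+1) * (2 ^ j * j`!))%N.
  by nia.
rewrite e; apply: leq_mul; last first.
  by apply: leq_trans IH _; apply: leq_pmull.
by rewrite -mul2n mulnS.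
Qed.

Lemma cosh_le (a : K) : expR a + expR (- a) <= 2 * expR (a ^+ 2 / 2).
Proof.
pose f := fun k => exp_coeff a k + exp_coeff (- a) k.
have fE k : f k = (if odd k then 0 else 2 * (a ^+ k / k`!%:R)).
  rewrite /f /exp_coeff /= exprNn -signr_odd.
  by case: (odd k); rewrite ?expr1 ?expr0 ?mulN1r ?mul1r ?mulNr; lra.
have f0 k : 0 <= f k.
  rewrite fE; case: ifP => // /negbT ok.
  by rewrite mulr_ge0 // divr_ge0 // exprn_even_ge0.
have step2 M : \sum_(0 <= k < M.*2) f k = \sum_(0 <= j < M) 2 * (a ^+ j.*2 / (j.*2)`!%:R).
  elim: M => [|M IH]; first by rewrite !big_geq.
  rewrite doubleS !big_nat_recr //= IH -addrA; congr (_ + _).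
  rewrite !fE /=.
  by rewrite odd_double /= addr0.
have step3 M : \sum_(0 <= j < M) (a ^+ j.*2 / (j.*2)`!%:R) <= expR (a ^+ 2 / 2).
  apply: (@le_trans _ _ (series (exp_coeff (a ^+ 2 / 2)) M)).
    rewrite /series /exp_coeff /=; apply: ler_sum => j _.
    rewrite -mul2n exprM expr_div_n ler_pdivlMr ?ltr0n ?fact_gt0 //.
    rewrite -mulrA; apply: ler_wpM2l; first by rewrite exprn_ge0 // sqr_ge0.
    rewrite mulrC ler_pdivrMr ?ltr0n ?fact_gt0 // ler_pdivlMl ?exprn_gt0 //.
    rewrite -natrX -natrM ler_nat.
    by rewrite mul2n fact_even.
  apply: nondecreasing_cvgn_le; last exact: is_cvg_series_exp_coeff.
  apply: nondecreasing_series => k _ _; rewrite /exp_coeff /=.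
  by rewrite divr_ge0 // exprn_ge0 // divr_ge0 // sqr_ge0.
have step1 M : \sum_(0 <= k < M) f k <= \sum_(0 <= k < M.*2) f k.
  rewrite -addnn [X in _ <= X](@big_cat_nat _ _ _ M) ?leq_addr //=.
  by rewrite lerDl sumr_ge0.
have key M : (series (exp_coeff a) + series (exp_coeff (- a))) M <= 2 * expR (a ^+ 2 / 2).
  have -> : (series (exp_coeff a) + series (exp_coeff (- a))) M
     = \sum_(0 <= k < M) f k by rewrite /series /= big_split.
  apply: (le_trans (step1 M)); rewrite step2 -mulr_sumr ler_pM2l //.
have E : expR a + expR (- a) = limn (series (exp_coeff a) + series (exp_coeff (- a))).
  by rewrite /expR -limD //; exact: is_cvg_series_exp_coeff.
rewrite E.
apply: limr_le.
  apply: is_cvgD; exact: is_cvg_series_exp_coeff.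
by near=> M; apply: key.
Unshelve. all: by end_near.
Qed.

Lemma conv_exp (b x u : K) : 0 < b -> - b <= x <= b ->
  expR (u * x) <= ((b - x) * expR (- (u * b)) + (b + x) * expR (u * b)) / (2 * b).
Proof.
move=> b0 /andP[hx1 hx2].
set e := expR (u * x).
have e0 : 0 <= e by apply: expR_ge0.
have A : e * (1 + (- (u * b) - u * x)) <= expR (- (u * b)).
  have -> : expR (- (u * b)) = e * expR (- (u * b) - u * x).
    by rewrite /e -expRD; congr expR; lra.
  by apply: ler_wpM2l => //; apply: expR_ge1Dx.
have B : e * (1 + (u * b - u * x)) <= expR (u * b).
  have -> : expR (u * b) = e * expR (u * b - u * x).
    by rewrite /e -expRD; congr expR; lra.
  by apply: ler_wpM2l => //; apply: expR_ge1Dx.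
rewrite ler_pdivlMr ?mulr_gt0 //.
have hb1 : 0 <= b - x by lra.
have hb2 : 0 <= b + x by lra.
have A' := ler_wpM2l hb1 A.
have B' := ler_wpM2l hb2 B.
have -> : e * (2 * b) = (b - x) * (e * (1 + (- (u * b) - u * x))) + (b + x) * (e * (1 + (u * b - u * x))).
  by ring.
by apply: lerD.
Qed.

Lemma subg (Y : nat) (q : 'I_Y.+1 -> K) (c u : K) : (0 < Y)%N ->
  (forall y, 0 <= q y) -> \sum_y q y = 1 -> 0 <= c <= 1 ->
  \sum_(y < Y.+1) q y * expR (u * (((y : nat)%:R - \sum_(z < Y.+1) q z * (z : nat)%:R) * c))
  <= expR (u ^+ 2 * Y%:R ^+ 2 / 2).
Proof.
move=> Y0 q0 q1 /andP[c0 c1].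
set m := \sum_(z < Y.+1) q z * (z : nat)%:R.
have hY : 0 < Y%:R :> K by rewrite ltr0n.
have yY (y : 'I_Y.+1) : 0 <= ((y : nat)%:R : K) <= Y%:R.
  by rewrite ler0n ler_nat -ltnS ltn_ord.
have m0 : 0 <= m by apply: sumr_ge0 => z _; rewrite mulr_ge0 // ler0n.
have mY : m <= Y%:R.
  rewrite /m (@le_trans _ _ (\sum_(z < Y.+1) q z * Y%:R)) //.
    by apply: ler_sum => z _; apply: ler_wpM2l => //; case/andP: (yY z).
  by rewrite -mulr_suml q1 mul1r.
set E1 := expR (- (u * Y%:R)); set E2 := expR (u * Y%:R).
pose x (y : 'I_Y.+1) := ((y : nat)%:R - m) * c.
have xb y : - Y%:R <= x y <= Y%:R.
  case/andP: (yY y) => h1 h2; rewrite /x; apply/andP; split; nra.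
apply: (@le_trans _ _ (\sum_(y < Y.+1) (q y * ((E1 + E2) / 2) + (q y * x y) * ((E2 - E1) / (2 * Y%:R))))).
  apply: ler_sum => y _.
  have h := @conv_exp Y%:R (x y) u hY (xb y).
  rewrite -/E1 -/E2 in h.
  have -> : q y * ((E1 + E2) / 2) + q y * x y * ((E2 - E1) / (2 * Y%:R))
     = q y * (((Y%:R - x y) * E1 + (Y%:R + x y) * E2) / (2 * Y%:R)).
    by field; rewrite gt_eqF.
  by apply: ler_wpM2l.
rewrite big_split /= -!mulr_suml q1 mul1r.
have -> : \sum_(y < Y.+1) q y * x y = 0.
  rewrite /x.
  under eq_bigr => y _ do rewrite mulrA mulrBr.
  by rewrite -mulr_suml sumrB -/m -mulr_suml q1 mul1r subrr mul0r.
rewrite mul0r addr0.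
have := cosh_le (u * Y%:R).
rewrite -/E1 -/E2 => h.
rewrite -exprMn.
lra.
Qed.

End S.

Lemma det_alg (K : realType) (ni nn lam C0 B Ah As EH ES DH DS Wh Ws : K) :
 0 < nn -> ni * nn = 1 -> `|DH| <= nn*lam*Wh -> `|DS| <= nn*lam*Ws ->
 -(ni*((EH+DH) - Ah - B)) + lam*Wh <= -(ni*((ES+DS) - As - B)) + lam*Ws ->
 ni*(C0 + Ah - EH) <= ni*(C0 + As - ES) + 2*lam*Ws.
Proof.
move=> nn0 nin h1 h2 hp.
have ni0 : 0 < ni.
  by rewrite -(pmulr_lgt0 _ nn0) nin.
have {}h1 : DH <= nn * lam * Wh by apply: le_trans (ler_norm _) h1.
have {}h2 : - DS <= nn * lam * Ws by rewrite -normrN in h2; apply: le_trans (ler_norm _) h2.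
have e1 : ni * DH <= lam * Wh.
  by have := ler_wpM2l (ltW ni0) h1; rewrite !mulrA nin mul1r.
have e2 : - (ni * DS) <= lam * Ws.
  by have := ler_wpM2l (ltW ni0) h2; rewrite !mulrA nin mul1r mulrN.
move: hp; rewrite !(mulrDr, mulrBr, mulrN) => hp.
lra.
Qed.

Arguments det_alg {K ni nn lam C0 B Ah As EH ES DH DS Wh Ws}.
Section M.
Variable K : realType.
Variables (R n Y : nat) (phi : 'I_R -> 'rV[K]_R) (q : 'I_R -> 'I_Y.+1 -> K) (rs : 'I_n -> 'I_R).
Hypothesis q0 : forall r y, 0 <= q r y.
Hypothesis q1 : forall r, \sum_(y < Y.+1) q r y = 1.

Local Notation p := (joint_true q rs).

Lemma prod_exp (g : 'I_n -> 'I_Y.+1 -> K) :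
  \sum_(ys : {ffun 'I_n -> 'I_Y.+1}) p ys * \prod_i g i (ys i)
  = \prod_i \sum_y q (rs i) y * g i y.
Proof.
rewrite bigA_distr_bigA /=; apply: eq_bigr => ys _.
by rewrite /joint_true -big_split.
Qed.

Lemma sum_p : \sum_(ys : {ffun 'I_n -> 'I_Y.+1}) p ys = 1.
Proof.
have := prod_exp (fun _ _ => 1).
rewrite (eq_bigr p) => [->|ys _]; last by rewrite big1 ?mulr1.
rewrite big1 // => i _.
by rewrite (eq_bigr (q (rs i))) => [|y _]; rewrite ?mulr1.
Qed.

Lemma p_ge0 ys : 0 <= p ys.
Proof. by apply: prodr_ge0 => i _. Qed.

Definition mean (i : 'I_n) := \sum_(y < Y.+1) q (rs i) y * (y : nat)%:R.

Lemma marginal i :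
  \sum_(ys : {ffun 'I_n -> 'I_Y.+1}) p ys * (ys i : nat)%:R = mean i.
Proof.
have := prod_exp (fun j y => if j == i then (y : nat)%:R else 1).
have E1 (ys : {ffun 'I_n -> 'I_Y.+1}) :
    \prod_j (if j == i then ((ys j : nat)%:R : K) else 1) = (ys i : nat)%:R.
  by rewrite (bigD1 i) //= eqxx big1 ?mulr1 // => j /negbTE ->.
have E2 : \prod_j \sum_(y < Y.+1) q (rs j) y * (if j == i then ((y : nat)%:R : K) else 1)
    = mean i.
  rewrite (bigD1 i) //= eqxx [X in _ * X]big1 ?mulr1 //.
  move=> j /negbTE jE; under eq_bigr do rewrite jE mulr1; exact: q1.
rewrite E2 => <-; apply: eq_bigr => ys _; by rewrite E1.
Qed.

Lemma ln_prod (I : finType) (F : I -> K) : (forall i, 0 < F i) ->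
  ln (\prod_i F i) = \sum_i ln (F i).
Proof.
move=> F0.
suff [] : 0 < \prod_i F i /\ ln (\prod_i F i) = \sum_i ln (F i) by [].
elim/big_rec2: _ => [|i a b _ [a0 <-]]; first by rewrite ln1.
split; first by rewrite mulr_gt0.
by rewrite lnM // posrE.
Qed.

Lemma ln_pmf (l : K) (y : nat) : 0 < pois_pmf (expR l) y /\
  ln (pois_pmf (expR l) y) = y%:R * l - expR l - ln (y`!%:R).
Proof.
rewrite /pois_pmf -expRM_natl -expRD.
have f0 : 0 < (y`!%:R : K) by rewrite ltr0n fact_gt0.
split; first by rewrite divr_gt0 // expR_gt0.
by rewrite ln_div ?posrE ?expR_gt0 // expRK.
Qed.

Definition Tk (k : 'I_R) (ys : {ffun 'I_n -> 'I_Y.+1}) :=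
  \sum_i ((ys i : nat)%:R : K) * phi (rs i) 0 k.
Definition Aa (th : 'rV[K]_R) := \sum_i expR (lin phi (rs i) th).
Definition Bb (ys : {ffun 'I_n -> 'I_Y.+1}) := \sum_i ln (((ys i : nat)`!)%:R : K).

Lemma ln_jm th ys : ln (joint_model phi th rs ys) = \sum_k th 0 k * Tk k ys - Aa th - Bb ys.
Proof.
rewrite /joint_model ln_prod; last by move=> i; case: (ln_pmf (lin phi (rs i) th) (ys i)).
rewrite (eq_bigr (fun i => ((ys i : nat)%:R * lin phi (rs i) th - expR (lin phi (rs i) th)
   - ln (((ys i : nat)`!)%:R)))); last by move=> i _; case: (ln_pmf (lin phi (rs i) th) (ys i)).
rewrite !sumrB /Aa /Bb; congr (_ - _ - _).
rewrite /Tk /lin.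
under eq_bigr do rewrite mulr_sumr.
rewrite exchange_big /=; apply: eq_bigr => k _.
by rewrite mulr_sumr; apply: eq_bigr => i _; ring.
Qed.

Definition ET k := \sum_(ys : {ffun 'I_n -> 'I_Y.+1}) p ys * Tk k ys.
Definition C0 := \sum_(ys : {ffun 'I_n -> 'I_Y.+1}) p ys * (ln (p ys) + Bb ys).

Lemma risk_eq th : risk q phi rs th = n%:R^-1 * (C0 + Aa th - \sum_k th 0 k * ET k).
Proof.
rewrite /risk; congr (_ * _).
under eq_bigr do rewrite ln_jm.
rewrite (eq_bigr (fun ys => p ys * (ln (p ys) + Bb ys) + p ys * Aa th
   - \sum_k th 0 k * (p ys * Tk k ys))); last first.
  move=> ys _.
  have -> : \sum_k th 0 k * (p ys * Tk k ys) = p ys * \sum_k th 0 k * Tk k ys.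
    by rewrite mulr_sumr; apply: eq_bigr => k _; ring.
  ring.
rewrite sumrB big_split /= -mulr_suml sum_p mul1r; congr (_ - _).
rewrite exchange_big /=; apply: eq_bigr => k _.
by rewrite /ET mulr_sumr.
Qed.

Lemma ET_eq k : ET k = \sum_i mean i * phi (rs i) 0 k.
Proof.
rewrite /ET /Tk.
under eq_bigr do rewrite mulr_sumr.
rewrite exchange_big /=; apply: eq_bigr => i _.
rewrite -marginal mulr_suml; apply: eq_bigr => ys _; ring.
Qed.

Hypothesis phi01 : forall r k, 0 <= phi r 0 k <= 1.

Lemma chernoff (k : 'I_R) (sg t : K) : (0 < Y)%N -> (0 < n)%N -> sg ^+ 2 = 1 -> 0 <= t ->
  \sum_(ys : {ffun 'I_n -> 'I_Y.+1} | t < sg * (Tk k ys - ET k)) p ys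
  <= expR (- (t ^+ 2 / (2 * n%:R * Y%:R ^+ 2))).
Proof.
move=> Y0 n0 sg1 t0.
have hY : 0 < Y%:R :> K by rewrite ltr0n.
have hn : 0 < n%:R :> K by rewrite ltr0n.
set s := t / (n%:R * Y%:R ^+ 2).
have s0 : 0 <= s by rewrite divr_ge0 // mulr_ge0 // exprn_ge0 // ltW.
have DE ys : Tk k ys - ET k = \sum_i ((ys i : nat)%:R - mean i) * phi (rs i) 0 k.
  by rewrite ET_eq /Tk -sumrB; apply: eq_bigr => i _; rewrite mulrBl.
apply: (@le_trans _ _ (\sum_(ys : {ffun 'I_n -> 'I_Y.+1}) p ys * expR (s * (sg * (Tk k ys - ET k) - t)))).
  rewrite big_mkcond /=; apply: ler_sum => ys _; case: ifP => h.
    rewrite ler_peMr ?p_ge0 // -expR0 ler_expR mulr_ge0 // subr_ge0 ltW //.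
  by rewrite mulr_ge0 ?p_ge0 ?expR_ge0.
have E2 : \sum_(ys : {ffun 'I_n -> 'I_Y.+1}) p ys * expR (s * (sg * (Tk k ys - ET k) - t))
  = expR (- (s * t)) * \prod_i \sum_(y < Y.+1) q (rs i) y *
      expR ((s * sg) * (((y : nat)%:R - mean i) * phi (rs i) 0 k)).
  rewrite -prod_exp mulr_sumr; apply: eq_bigr => ys _.
  rewrite DE.
  have ex : s * (sg * \sum_i ((ys i : nat)%:R - mean i) * phi (rs i) 0 k - t)
     = - (s * t) + \sum_i (s * sg) * (((ys i : nat)%:R - mean i) * phi (rs i) 0 k).
    by rewrite -mulr_sumr; ring.
  by rewrite ex expRD expR_sum mulrCA.
rewrite E2.
apply: (@le_trans _ _ (expR (- (s * t)) * \prod_(i < n) expR (s ^+ 2 * Y%:R ^+ 2 / 2))).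
  apply: ler_wpM2l; first exact: expR_ge0.
  apply: ler_prod => i _; apply/andP; split.
    by apply: sumr_ge0 => y _; rewrite mulr_ge0 ?expR_ge0.
  have := @subg K Y (q (rs i)) (phi (rs i) 0 k) (s * sg) Y0 (q0 (rs i)) (q1 (rs i)) (phi01 _ _).
  by rewrite exprMn sg1 mulr1.
rewrite prodr_const card_ord -expRM_natl -expRD ler_expR.
rewrite /s le_eqVlt; apply/orP; left; apply/eqP.
field; rewrite ?gt_eqF //.
Qed.

Lemma main (gamma : K) (w : 'rV[K]_R) (wo : K)
  (th_star : 'rV[K]_R) (th_hat : {ffun 'I_n -> 'I_Y.+1} -> 'rV[K]_R) :
  (0 < R)%N -> (0 < n)%N ->
  0 < gamma < 2^-1 ->
  (forall k, 0 < w 0 k) ->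
  (exists k, wo = w 0 k) -> (forall k, wo <= w 0 k) ->
  (forall th, risk q phi rs th_star <= risk q phi rs th) ->
  (forall ys th, pen_obj phi rs gamma w ys (th_hat ys) <= pen_obj phi rs gamma w ys th) ->
  Num.max 0 (1 - 2 * R%:R * expR (- (wo ^+ 2 * n%:R `^ (1 - 2 * gamma)) / (2 * Y%:R ^+ 2)))
  <= prob q rs (fun ys => risk q phi rs (th_hat ys)
                          <= risk q phi rs th_star + 2 * n%:R `^ (- gamma) * wl1 w th_star).
Proof.
move=> R0 n0 hg hw [k0 hk0] hwo hstar hhat.
have hn : 0 < n%:R :> K by rewrite ltr0n.
set lam := n%:R `^ (- gamma).
have lam0 : 0 < lam by apply: powR_gt0.
pose t k := n%:R * lam * w 0 k.
pose G (ys : {ffun 'I_n -> 'I_Y.+1}) := [forall k, `|Tk k ys - ET k| <= t k].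
have bnd ys (th : 'rV[K]_R) : G ys -> `|\sum_k th 0 k * (Tk k ys - ET k)| <= n%:R * lam * wl1 w th.
  move=> /forallP Gy.
  rewrite /wl1 mulr_sumr; apply: le_trans (ler_norm_sum _ _ _) _.
  apply: ler_sum => k _; rewrite normrM (normrM (w 0 k)) (gtr0_norm (hw k)).
  rewrite [X in _ <= X](_ : _ = `|th 0 k| * t k); last by rewrite /t; ring.
  by apply: ler_wpM2l; [exact: normr_ge0 | exact: Gy].
have det ys : G ys -> risk q phi rs (th_hat ys)
     <= risk q phi rs th_star + 2 * lam * wl1 w th_star.
  move=> Gy; have hp := hhat ys th_star.
  rewrite /pen_obj !ln_jm in hp; rewrite !risk_eq.
  set h := th_hat ys in hp *.
  have sp (th : 'rV[K]_R) : \sum_k th 0 k * Tk k ys = \sum_k th 0 k * ET k + \sum_k th 0 k * (Tk k ys - ET k).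
    by rewrite -big_split; apply: eq_bigr => k _ /=; ring.
  rewrite !sp in hp.
  exact: (det_alg hn (mulVf (lt0r_neq0 hn)) (bnd ys h Gy) (bnd ys th_star Gy) hp).
have p0 := p_ge0.
rewrite ge_max; apply/andP; split; first by apply: sumr_ge0 => ys _.
have mono : prob q rs G <= prob q rs (fun ys => risk q phi rs (th_hat ys)
                          <= risk q phi rs th_star + 2 * lam * wl1 w th_star).
  rewrite /prob [X in _ <= X]big_mkcond [X in X <= _]big_mkcond /=.
  apply: ler_sum => ys _; case: (boolP (G ys)) => Gy.
    by rewrite (det ys Gy).
  by case: ifP.
apply: le_trans mono.
have split1 : prob q rs G = 1 - \sum_(ys | ~~ G ys) p ys.
  by rewrite -(sum_p) (bigID G) /= addrK.
rewrite split1.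
case: (posnP Y) => [Y0|Y0].
  have -> : (Y%:R : K) = 0 by rewrite Y0.
  rewrite expr0n /= mulr0 invr0 mulr0 expR0 mulr1.
  have : 1 <= (R%:R : K) by rewrite ler1n.
  have : 0 <= \sum_(ys | ~~ G ys) p ys by apply: sumr_ge0.
  have : \sum_(ys | ~~ G ys) p ys <= 1.
    by rewrite -sum_p [X in _ <= X](bigID G) /= lerDr sumr_ge0.
  lra.
set E := expR (- (wo ^+ 2 * n%:R `^ (1 - 2 * gamma)) / (2 * Y%:R ^+ 2)).
have union : \sum_(ys | ~~ G ys) p ys <=
   \sum_k (\sum_(ys | t k < 1 * (Tk k ys - ET k)) p ys
         + \sum_(ys | t k < -1 * (Tk k ys - ET k)) p ys).
  rewrite (eq_bigr (fun k => \sum_(ys : {ffun 'I_n -> 'I_Y.+1})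
     ((if t k < 1 * (Tk k ys - ET k) then p ys else 0)
      + (if t k < -1 * (Tk k ys - ET k) then p ys else 0)))); last first.
    by move=> k _; rewrite big_split /=; congr (_ + _); apply: big_mkcond.
  rewrite exchange_big /= big_mkcond /=; apply: ler_sum => ys _.
  case: ifP => nG; last by apply: sumr_ge0 => k _; case: ifP; case: ifP; rewrite ?addr0 ?add0r ?addr0 // addr_ge0.
  move: nG; rewrite /G => /forallPn [k]; rewrite -ltNge ltr_normr => hk.
  rewrite (bigD1 k) //= -[X in X <= _]addr0; apply: lerD; last first.
    by apply: sumr_ge0 => j _; case: ifP; case: ifP; rewrite ?addr0 ?add0r // addr_ge0.
  rewrite !mul1r !mulN1r.
  by case/orP: hk => ->; case: ifP; rewrite ?addr0 ?add0r // lerDl.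
have tb k : expR (- (t k ^+ 2 / (2 * n%:R * Y%:R ^+ 2))) <= E.
  have hY : 0 < Y%:R :> K by rewrite ltr0n.
  have npow : n%:R `^ (1 - 2 * gamma) = n%:R * lam ^+ 2.
    have -> : 1 - 2 * gamma = 1 + (- gamma + - gamma) by ring.
    have nz : (n%:R : K) != 0 by rewrite pnatr_eq0 -lt0n n0.
    rewrite powRD; last by rewrite nz implybT.
    rewrite powRD; last by rewrite nz implybT.
    by rewrite powRr1 ?ler0n // expr2.
  rewrite /E ler_expR npow mulNr lerN2.
  have -> : t k ^+ 2 / (2 * n%:R * Y%:R ^+ 2) = w 0 k ^+ 2 * (n%:R * lam ^+ 2) / (2 * Y%:R ^+ 2).
    by rewrite /t; field; rewrite ?gt_eqF.
  apply: ler_wpM2r; first by rewrite invr_ge0 mulr_ge0 // exprn_ge0 // ltW.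
  apply: ler_wpM2r; first by rewrite mulr_ge0 ?exprn_ge0 // ltW.
  have := hwo k; have := hw k0; rewrite -hk0 => h1 h2.
  nra.
have t0 k : 0 <= t k by rewrite /t mulr_ge0 ?mulr_ge0 // ltW // hw.
have ch : \sum_(ys | ~~ G ys) p ys <= 2 * R%:R * E.
  apply: le_trans union _.
  apply: (@le_trans _ _ (\sum_(k < R) (E + E))); last first.
    by rewrite sumr_const card_ord -mulr_natl le_eqVlt; apply/orP; left; apply/eqP; ring.
  apply: ler_sum => k _; apply: lerD; apply: le_trans (tb k).
    by apply: chernoff => //; rewrite expr1n.
  by apply: chernoff => //; rewrite sqrrN expr1n.
lra.
Qed.

End M.

Theorem theorem1 (K : realType) (R n Y : nat)
  (phi : 'I_R -> 'rV[K]_R) (q : 'I_R -> 'I_Y.+1 -> K) (rs : 'I_n -> 'I_R)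
  (gamma : K) (w : 'rV[K]_R) (wo : K)
  (th_star : 'rV[K]_R) (th_hat : {ffun 'I_n -> 'I_Y.+1} -> 'rV[K]_R) :
  (0 < R)%N -> (0 < n)%N ->
  (forall r k, 0 <= phi r 0 k <= 1) ->
  (forall r y, 0 <= q r y) ->
  (forall r, \sum_(y < Y.+1) q r y = 1) ->
  0 < gamma < 2^-1 ->
  (forall k, 0 < w 0 k) ->
  (exists k, wo = w 0 k) -> (forall k, wo <= w 0 k) ->
  (forall th, risk q phi rs th_star <= risk q phi rs th) ->
  (forall ys th, pen_obj phi rs gamma w ys (th_hat ys) <= pen_obj phi rs gamma w ys th) ->
  Num.max 0 (1 - 2 * R%:R * expR (- (wo ^+ 2 * n%:R `^ (1 - 2 * gamma)) / (2 * Y%:R ^+ 2)))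
  <= prob q rs (fun ys => risk q phi rs (th_hat ys)
                          <= risk q phi rs th_star + 2 * n%:R `^ (- gamma) * wl1 w th_star).
Proof.
Proof.
move=> R0 n0 hphi hq0 hq1 hg hw hk hwo hstar hhat.
exact: (@main K R n Y phi q rs hq0 hq1 hphi gamma w wo th_star th_hat R0 n0 hg hw hk hwo hstar hhat).
Qed.
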